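(* Let $\Gamma=(G,\sigma)$ be a connected signed graph on $n$ vertices, let $M$ be any real symmetric $n\times n$ matrix compatible with $\Gamma$, let $\lambda_n$ be the largest eigenvalue of $M$, and let $f_n$ be an eigenfunction of $M$ for $\lambda_n$. Then $\Gamma$ is antibalanced if and only if $\mathfrak{W}(f_n)=\mathfrak{S}(f_n)=n$. Moreover, when $\Gamma$ is antibalanced, $\lambda_n$ is simple.
   Context: Graphs are finite, simple, undirected. A signed graph $\Gamma=(G,\sigma)$ is a graph $G=(V,E)$ with $\sigma:E\to\{+1,-1\}$. It is antibalanced if every odd cycle has negative sign and every even cycle positive sign (sign of a cycle = product of signs of its edges). The induced signed graph of a real symmetric $n\times n$ matrix $M$ has vertices $x_1,\dots,x_n$, edge $\{x_i,x_j\}$ iff $i\neq j$ and $M_{ij}\ne0$, with sign $-M_{ij}/|M_{ij}|$; $M$ is compatible with $\Gamma$ if its induced signed graph is $\Gamma$. Eigenfunctions are nonzero eigenvectors, viewed as functions on $V$. A walk is $y_1,\dots,y_m$ ($m\ge2$) with consecutive vertices adjacent. For $f:V\to\mathbb R$, $\Omega=\{x:f(x)\ne0\}$. S-walk: $f(y_j)\sigma_{y_jy_{j+1}}f(y_{j+1})>0$ for all $j$. W-walk: for any two consecutive nonzeros $y_i,y_j$ ($i<j$, $f(y_l)=0$ for $i<l<j$), $f(y_i)\sigma_{y_iy_{i+1}}\cdots\sigma_{y_{j-1}y_j}f(y_j)>0$. $\mathfrak{S}(f)$ is the number of equivalence classes on $\Omega$ of the relation ''$x=y$ or an S-walk connects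 $x$ and $y$'' (the strong nodal domains), and $\mathfrak{W}(f)$ is the number of classes of ''$x=y$ or a W-walk connects $x$ and $y$'' (the weak nodal domains). *)

(* Defs.v *)
From HB Require Import structures.
From mathcomp Require Import all_boot all_order all_algebra.
From mathcomp Require Import boolp reals.
Set Implicit Arguments. Unset Strict Implicit. Unset Printing Implicit Defensive.
Import Order.TTheory GRing.Theory Num.Theory.
Local Open Scope ring_scope.

Section SignedGraphs.
Variables (R : realType) (n : nat).

(* A signed graph on vertex set 'I_n: simple graph [adj] with edge signs [sgn]
   (only the values on edges matter). *)
Definition signed_graph (adj : rel 'I_n) (sgn : 'I_n -> 'I_n -> R) : Prop :=
  [/\ symmetric adj, irreflexive adj,
      (forall i j, adj i j -> sgn i j = sgn j i) &
      (forall i j, adj i j -> sgn i j = 1 \/ sgn i j = -1)].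

Definition connected_graph (adj : rel 'I_n) : Prop :=
  forall i j, connect adj i j.

Definition compatible (adj : rel 'I_n) (sgn : 'I_n -> 'I_n -> R)
    (M : 'M[R]_n) : Prop :=
  forall i j, i != j ->
    (adj i j = (M i j != 0)) /\ (adj i j -> sgn i j = - Num.sg (M i j)).

(* Sign of the closed walk listed by s: product of the signs of the edges
   s_0 s_1, ..., s_{k-2} s_{k-1}, s_{k-1} s_0. *)
Definition cycle_sign (sgn : 'I_n -> 'I_n -> R) (s : seq 'I_n) : R :=
  \prod_(e <- zip s (rot 1 s)) sgn e.1 e.2.

Definition is_cycle (adj : rel 'I_n) (s : seq 'I_n) : Prop :=
  [/\ (3 <= size s)%N, uniq s & cycle adj s].

Definition antibalanced (adj : rel 'I_n) (sgn : 'I_n -> 'I_n -> R) : Prop :=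
  forall s, is_cycle adj s ->
    cycle_sign sgn s = (if odd (size s) then -1 else 1).

Definition walk_from_to (adj : rel 'I_n) (s : seq 'I_n) (x y : 'I_n) : Prop :=
  [/\ (2 <= size s)%N, path adj (head x s) (behead s),
      head x s = x & last x s = y].

(* S-walk condition (d is an irrelevant default for nth). *)
Definition S_walk (sgn : 'I_n -> 'I_n -> R) (f : 'I_n -> R) (d : 'I_n)
    (s : seq 'I_n) : Prop :=
  forall j, (j.+1 < size s)%N ->
    0 < f (nth d s j) * sgn (nth d s j) (nth d s j.+1) * f (nth d s j.+1).

(* W-walk condition: for any two consecutive nonzeros y_i, y_j (all vertices
   strictly between being zeros of f), f(y_i) sigma ... sigma f(y_j) > 0. *)
Definition W_walk (sgn : 'I_n -> 'I_n -> R) (f : 'I_n -> R) (d : 'I_n)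
    (s : seq 'I_n) : Prop :=
  forall i j, (i < j)%N -> (j < size s)%N ->
    f (nth d s i) != 0 -> f (nth d s j) != 0 ->
    (forall l, (i < l)%N -> (l < j)%N -> f (nth d s l) = 0) ->
    0 < f (nth d s i) * (\prod_(i <= l < j) sgn (nth d s l) (nth d s l.+1))
        * f (nth d s j).

Definition nodal_set (f : 'I_n -> R) : {set 'I_n} := [set x | f x != 0].

Definition S_rel (adj : rel 'I_n) (sgn : 'I_n -> 'I_n -> R) (f : 'I_n -> R)
    (x y : 'I_n) : Prop :=
  x = y \/ exists s, walk_from_to adj s x y /\ S_walk sgn f x s.

Definition W_rel (adj : rel 'I_n) (sgn : 'I_n -> 'I_n -> R) (f : 'I_n -> R)
    (x y : 'I_n) : Prop :=
  x = y \/ exists s, walk_from_to adj s x y /\ W_walk sgn f x s.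

Definition nclasses (P : 'I_n -> 'I_n -> Prop) (Om : {set 'I_n}) : nat :=
  #|[set [set y in Om | `[< P x y >]] | x in Om]|.

Definition nS (adj : rel 'I_n) (sgn : 'I_n -> 'I_n -> R) (f : 'I_n -> R) :=
  nclasses (S_rel adj sgn f) (nodal_set f).
Definition nW (adj : rel 'I_n) (sgn : 'I_n -> 'I_n -> R) (f : 'I_n -> R) :=
  nclasses (W_rel adj sgn f) (nodal_set f).

Definition largest_eigenvalue (M : 'M[R]_n) (lam : R) : Prop :=
  eigenvalue M lam /\ forall mu, eigenvalue M mu -> mu <= lam.

Definition eigenfunction (M : 'M[R]_n) (lam : R) (f : 'cV[R]_n) : Prop :=
  f != 0 /\ M *m f = lam *: f.

Definition simple_eigenvalue (M : 'M[R]_n) (lam : R) : Prop :=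
  \rank (eigenspace M lam) = 1%N.

End SignedGraphs.

(* Main.v *)
Require Import Defs.
From HB Require Import structures.
From mathcomp Require Import all_boot all_order all_algebra.
From mathcomp Require Import boolp reals.
From mathcomp Require Import classical_sets topology normedtype derive.
From mathcomp Require Import ring lra zify.
Set Implicit Arguments. Unset Strict Implicit. Unset Printing Implicit Defensive.
Import Order.TTheory GRing.Theory Num.Theory.
Import numFieldTopology.Exports numFieldNormedType.Exports.
Local Open Scope ring_scope.

Section Ray.
Variables (R : realType) (n : nat) (M : 'M[R]_n).

Definition qf (x : 'I_n -> R) := \sum_i \sum_j x i * M i j * x j.
Definition nf (x : 'I_n -> R) := \sum_i x i ^+ 2.

Lemma cont_sum (T : topologicalType) (I : Type) (r : seq I) (F : I -> T -> R) :
  (forall i, continuous (F i)) -> continuous (fun x => \sum_(i <- r) F i x).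
Proof.
move=> Fc; elim: r => [|i r IH].
  under eq_fun do rewrite big_nil; exact: cst_continuous.
under eq_fun do rewrite big_cons.
by move=> x; apply: continuousD; [exact: Fc|exact: IH].
Qed.

Lemma qf_cont : continuous (fun y : 'rV[R]_n => qf (fun i => y ord0 i)).
Proof.
apply: cont_sum => i; apply: cont_sum => j x.
apply: (@continuousM R _ (fun y : 'rV[R]_n => y ord0 i * M i j) (fun y => y ord0 j)); last exact: coord_continuous.
apply: (@continuousM R _ (fun y : 'rV[R]_n => y ord0 i) (fun y => M i j)); first exact: coord_continuous.
exact: cst_continuous.
Qed.

Lemma nf_cont : continuous (fun y : 'rV[R]_n => nf (fun i => y ord0 i)).
Proof.
apply: cont_sum => i x.
under eq_fun do rewrite expr2.
by apply: (@continuousM R _ (fun y : 'rV[R]_n => y ord0 i) (fun y => y ord0 i)); exact: coord_continuous.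
Qed.


Definition Mx (x : 'I_n -> R) i := \sum_j M i j * x j.

Lemma qf_lin x w t : qf (fun i => x i + t * w i) =
  qf x + t * (\sum_i w i * Mx x i + \sum_i x i * Mx w i) + t ^+ 2 * qf w.
Proof.
rewrite /qf /Mx mulrDr !mulr_sumr -!big_split /=; apply: eq_bigr => i _.
rewrite !mulr_sumr -!big_split /=; apply: eq_bigr => j _.
ring.
Qed.

Lemma nf_lin x w t : nf (fun i => x i + t * w i) =
  nf x + t * (2 * \sum_i x i * w i) + t ^+ 2 * nf w.
Proof.
rewrite /nf !mulr_sumr -!big_split /=; apply: eq_bigr => i _.
ring.
Qed.

Lemma qf_scale a x : qf (fun i => a * x i) = a ^+ 2 * qf x.
Proof.
rewrite /qf !mulr_sumr; apply: eq_bigr => i _.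
rewrite !mulr_sumr; apply: eq_bigr => j _; ring.
Qed.

Lemma nf_scale a x : nf (fun i => a * x i) = a ^+ 2 * nf x.
Proof. rewrite /nf !mulr_sumr; apply: eq_bigr => i _; ring. Qed.

Lemma nf_ge0 x : 0 <= nf x.
Proof. by apply: sumr_ge0 => i _; exact: sqr_ge0. Qed.

Lemma nf_eq0 x : nf x = 0 -> forall i, x i = 0.
Proof.
move=> h i; have := @psumr_eq0P _ _ _ _ (fun j _ => sqr_ge0 (x j)) h i isT.
by move/eqP; rewrite sqrf_eq0 => /eqP.
Qed.

Hypothesis Msym : forall i j, M i j = M j i.

Lemma Mx_sym x w : \sum_i x i * Mx w i = \sum_i w i * Mx x i.
Proof.
rewrite /Mx.
under eq_bigr do rewrite mulr_sumr.
rewrite exchange_big /=; apply: eq_bigr => j _.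
rewrite mulr_sumr; apply: eq_bigr => i _.
by rewrite Msym; ring.
Qed.

Lemma quad c g : (forall x, qf x <= c * nf x) -> qf g = c * nf g ->
  forall i, Mx g i = c * g i.
Proof.
move=> H Hg.
pose r i := c * g i - Mx g i.
pose S := \sum_i r i ^+ 2.
pose K := c * nf r - qf r.
have K0 : 0 <= K by rewrite /K subr_ge0.
have key : forall t, 0 <= 2 * t * S + t ^+ 2 * K.
  move=> t; have := H (fun i => g i + t * r i).
  rewrite qf_lin nf_lin -subr_ge0.
  have E : S = c * \sum_i g i * r i - \sum_i r i * Mx g i.
    rewrite /S mulr_sumr -sumrB; apply: eq_bigr => i _; rewrite /r; ring.
  suff -> : 2 * t * S + t ^+ 2 * K = c * (nf g + t * (2 * \sum_i g i * r i) + t ^+ 2 * nf r) -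
     (qf g + t * (\sum_i r i * Mx g i + \sum_i g i * Mx r i) + t ^+ 2 * qf r) by [].
  rewrite E /K Hg (Mx_sym g r); ring.
pose u := S / (K + 1).
have K1 : K + 1 != 0 by rewrite gt_eqF // ltr_wpDl.
have Su : S = u * (K + 1) by rewrite /u divfK.
have := key (- u); rewrite Su => h.
have hu : u ^+ 2 * (K + 2) <= 0 by nra.
have u0 : u = 0.
  apply/eqP; rewrite -sqrf_eq0 eq_le sqr_ge0 andbT.
  have K2 : 0 < K + 2 by rewrite ltr_wpDl.
  by rewrite -(pmulr_lle0 _ K2).
have S0 : S = 0 by rewrite Su u0 mul0r.
move=> i; have := @psumr_eq0P _ _ _ _ (fun j _ => sqr_ge0 (r j)) S0 i isT.
by move/eqP; rewrite sqrf_eq0 subr_eq0 => /eqP <-.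
Qed.

Lemma rayleigh lam : (forall mu, eigenvalue M mu -> mu <= lam) ->
  forall x, qf x <= lam * nf x.
Proof.
move=> Hl.
have [n0|npos] := posnP n.
  move=> x; have E : forall F : 'I_n -> R, \sum_i F i = 0.
    by move=> F; apply: big1 => i _; have := ltn_ord i; rewrite {2}n0.
  by rewrite /qf /nf !E mulr0.
pose j0 : 'I_n := Ordinal npos.
pose A := [set y : 'rV[R]_n | nf (fun i => y ord0 i) = 1]%classic.
have A0 : (A !=set0)%classic.
  exists (delta_mx ord0 j0); rewrite /A /= /nf (bigD1 j0) //= big1 => [|i /negbTE ij].
    by rewrite mxE !eqxx /= expr1n addr0.
  by rewrite mxE ij andbF expr2 mulr0.
have Ac : compact A.
  have Mnco : compact [set v : 'rV[R]_n | forall i, `[(-1 : R), 1]%classic (v ord0 i)]%classic.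
    have := @rV_compact R n (fun=> `[(-1 : R), 1]%classic) (fun _ => @segment_compact R (-1) 1).
    exact.
  have Acl : closed A.
    have := @preimage_closed _ _ (fun y : 'rV[R]_n => nf (fun i => y ord0 i)) [set x | x = 1]%classic.
    by apply => [y _|]; [exact: nf_cont|exact: closed_eq].
  apply: subclosed_compact Acl Mnco _.
  move=> y /= Hy i; rewrite /= in_itv /=.
  have : y ord0 i ^+ 2 <= 1.
    rewrite -Hy /nf (bigD1 i) //= lerDl; apply: sumr_ge0 => j _; exact: sqr_ge0.
  by move=> h; apply/andP; split; nra.
have [u uA umax] := EVT_max_rV A0 Ac (continuous_subspaceT (qf_cont)).
pose mu := qf (fun i => u ord0 i).
have uA' : nf (fun i => u ord0 i) = 1 by exact: (set_mem uA).
have bound : forall x, qf x <= mu * nf x.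
  move=> x; have [x0|xn0] := eqVneq (nf x) 0.
    have xi0 := nf_eq0 x0.
    rewrite x0 mulr0 /qf big1 // => i _; rewrite big1 // => j _.
    by rewrite xi0 !mul0r.
  have np : 0 < nf x by rewrite lt_def xn0 nf_ge0.
  pose s := Num.sqrt (nf x).
  have sp : 0 < s by rewrite sqrtr_gt0.
  have s2 : s ^+ 2 = nf x by rewrite sqr_sqrtr // ltW.
  pose y : 'rV[R]_n := \row_i (s^-1 * x i).
  have yA : y \in A.
    apply: mem_set; rewrite /A /=.
    have -> : (fun i => y ord0 i) = (fun i => s^-1 * x i) by apply: funext => i; rewrite mxE.
    rewrite nf_scale -s2 exprVn mulVf // expf_neq0 // gt_eqF //.
  have := umax y yA.
  have -> : (fun i => y ord0 i) = (fun i => s^-1 * x i) by apply: funext => i; rewrite mxE.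
  rewrite qf_scale => h.
  have e : qf x = s ^+ 2 * (s^-1 ^+ 2 * qf x).
    by rewrite mulrA -exprMn mulfV ?gt_eqF // expr1n mul1r.
  by rewrite e -s2 [mu * _]mulrC ler_pM2l ?exprn_gt0.
have ev : eigenvalue M mu.
  have Hq := quad bound (esym (etrans (congr1 (fun z => mu * z) uA') (mulr1 mu))).
  apply/eigenvalueP; exists u.
    apply/rowP => j; rewrite !mxE -[RHS]Hq /Mx; apply: eq_bigr => i _.
    by rewrite Msym mulrC.
  apply/eqP => u0; move: uA'; rewrite u0 /nf big1 => [|i _]; last by rewrite mxE expr2 mulr0.
  by move/eqP; rewrite eq_sym oner_eq0.
move=> x; apply: le_trans (bound x) _; apply: ler_wpM2r; first exact: nf_ge0.
exact: Hl.
Qed.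

End Ray.

Section Comb.
Variables (R : realType) (n : nat) (adj : rel 'I_n) (sgn : 'I_n -> 'I_n -> R).

Fixpoint wp (x : 'I_n) (p : seq 'I_n) : R :=
  if p is y :: p' then sgn x y * wp y p' else 1.

Lemma wp_cat x p q : wp x (p ++ q) = wp x p * wp (last x p) q.
Proof.
elim: p x => [|y p IH] x /=; first by rewrite mul1r.
by rewrite IH mulrA.
Qed.

Lemma prod_zip_rcons y p z :
  \prod_(e <- zip (y :: p) (rcons p z)) sgn e.1 e.2 = wp y p * sgn (last y p) z.
Proof.
elim: p y => [|w p IH] y /=; first by rewrite big_cons big_nil mulr1 mul1r.
by rewrite big_cons IH mulrA.
Qed.

Lemma cycle_sign_cons y p : cycle_sign sgn (y :: p) = wp y p * sgn (last y p) y.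
Proof. by rewrite /cycle_sign rot1_cons prod_zip_rcons. Qed.

Lemma not_uniq_split (T : eqType) (s : seq T) :
  ~~ uniq s -> exists a y b c, s = a ++ y :: b ++ y :: c.
Proof.
elim: s => [|z s IH] //=; rewrite negb_and negbK.
case/orP => [zs|/IH [a [y [b [c ->]]]]].
  by case/splitPr: zs => b c; exists [::], z, b, c.
by exists (z :: a), y, b, c.
Qed.

Hypothesis Hsg : signed_graph adj sgn.

Lemma sgn_sq x y : adj x y -> sgn x y ^+ 2 = 1.
Proof.
have [_ _ _ pm] := Hsg.
by move=> /pm [] ->; rewrite ?expr1n // sqrrN expr1n.
Qed.

Lemma wp_sq x p : path adj x p -> wp x p ^+ 2 = 1.
Proof.
elim: p x => [|y p IH] x /=; first by rewrite expr1n.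
by case/andP => hxy hp; rewrite exprMn sgn_sq // IH // mulr1.
Qed.

Lemma closed_walk : antibalanced adj sgn ->
  forall p x, path adj x p -> last x p = x -> wp x p = (-1) ^+ size p.
Proof.
have [asym airr ssym _] := Hsg.
move=> Hab p; have [k] := ubnP (size p); elim: k p => // k IH p hk x hp hl.
case: (boolP (uniq p)) => [up|/not_uniq_split [a [y [b [c ep]]]]].
  case: p hk hp hl up => [|y [|z [|w p]]] hk hp hl up.
  - by rewrite expr0.
  - by move: hl hp => /= ->; rewrite airr.
  - move: hp hl => /= /andP [hxy /andP [hyz _]] hzx; subst z.
    rewrite (ssym _ _ hyz) mulr1 -expr2 sgn_sq //.
    by rewrite sqrrN expr1n.
  - set q := [:: z, w & p] in hk hp hl up *.
    have cyc : is_cycle adj (y :: q).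
      split => //; rewrite [cycle _ _]/= rcons_path.
      move: hp => /= /and4P [hxy h1 h2 h3].
      have -> : last w p = x by move: hl.
      by rewrite h1 h2 h3 hxy.
    have := Hab _ cyc; rewrite cycle_sign_cons.
    have -> : last y q = x by move: hl.
    move=> h; rewrite [wp x _]/= mulrC h -signr_odd.
    by case: (odd _); rewrite ?expr1 ?expr0.
subst p.
move: hp hl hk; rewrite -!cat_rcons => hp hl hk.
move: hp; rewrite !cat_path last_rcons => /and3P [h1 h2 h3].
move: h3; rewrite last_rcons => h3.
move: hl; rewrite !last_cat !last_rcons => hl.
have E : wp x (rcons a y ++ (rcons b y ++ c)) =
  wp y (rcons b y) * wp x (rcons a y ++ c).
  by rewrite !wp_cat !last_rcons; ring.
rewrite E.
have hk' : (size (rcons a y ++ rcons b y ++ c) <= k)%N.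
  by move: hk; rewrite ltnS.
rewrite (IH (rcons b y)) ?last_rcons //; last first.
  by move: hk'; rewrite !size_cat !size_rcons; set sa := size a; set sb := size b; set sc := size c; lia.
rewrite (IH (rcons a y ++ c)) //; first last.
- by rewrite last_cat last_rcons.
- by rewrite cat_path h1 last_rcons h3.
- by move: hk'; rewrite !size_cat !size_rcons; set sa := size a; set sb := size b; set sc := size c; lia.
rewrite -exprD; congr (_ ^+ _).
by rewrite !size_cat !size_rcons; set sa := size a; set sb := size b; set sc := size c; lia.
Qed.

Lemma last_rev_belast (x : 'I_n) (p : seq 'I_n) : last (last x p) (rev (belast x p)) = x.
Proof.
case: p => [|y p] //=.
by rewrite rev_cons last_rcons.
Qed.

Lemma wp_rev x p : path adj x p -> wp (last x p) (rev (belast x p)) = wp x p.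
Proof.
have [asym airr ssym _] := Hsg.
elim: p x => [|y p IH] x //= /andP [hxy hp].
rewrite rev_cons -cats1 wp_cat IH // last_rev_belast /=.
by rewrite mulr1 mulrC (ssym _ _ hxy).
Qed.

Lemma path_rev_belast x p : path adj x p -> path adj (last x p) (rev (belast x p)).
Proof.
have [asym airr ssym _] := Hsg.
rewrite rev_path => hp.
suff <- : path adj x p = path (fun z : 'I_n => adj^~ z) x p by [].
by apply: eq_path => u v /=; rewrite asym.
Qed.

Lemma switching : antibalanced adj sgn -> connected_graph adj -> forall r : 'I_n,
  exists D : 'I_n -> R, (forall i, D i ^+ 2 = 1) /\
    (forall u v, adj u v -> sgn u v = - (D u * D v)).
Proof.
move=> Hab Hc r.
have Hp : forall v, exists p, path adj r p && (last r p == v).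
  by move=> v; have /connectP [p hp ->] := Hc r v; exists p; rewrite hp eqxx.
pose pv v := xchoose (Hp v).
have pvP : forall v, path adj r (pv v) /\ last r (pv v) = v.
  by move=> v; have /andP [h /eqP e] := xchooseP (Hp v).
have sq1 : forall k, ((-1 : R) ^+ k) ^+ 2 = 1.
  by move=> k; rewrite -exprM mulnC exprM sqrrN expr1n expr1n.
exists (fun v => wp r (pv v) * (-1) ^+ size (pv v)); split.
  by move=> i; rewrite exprMn wp_sq ?(pvP i).1 // sq1 mulr1.
move=> u v huv.
have [hu lu] := pvP u; have [hv lv] := pvP v.
pose W := pv u ++ v :: rev (belast r (pv v)).
have hW : path adj r W.
  rewrite cat_path hu lu /= huv /=.
  by have := path_rev_belast hv; rewrite lv.
have lW : last r W = r.
  by rewrite last_cat /= -{1}lv last_rev_belast.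
have := closed_walk Hab hW lW.
rewrite wp_cat lu /= -{2}lv wp_rev // size_cat /= size_rev size_belast.
set a := wp r (pv u); set b := wp r (pv v).
set su := size (pv u); set sv := size (pv v).
move=> h.
have a2 : a ^+ 2 = 1 by rewrite wp_sq.
have b2 : b ^+ 2 = 1 by rewrite wp_sq.
have -> : sgn u v = a ^+ 2 * b ^+ 2 * sgn u v by rewrite a2 b2 !mul1r.
have -> : a ^+ 2 * b ^+ 2 * sgn u v = a * b * (a * (sgn u v * b)) by ring.
rewrite h exprD exprS; ring.
Qed.

End Comb.

Section Core.
Variables (R : realType) (n : nat) (adj : rel 'I_n) (M : 'M[R]_n) (lam : R) (D : 'I_n -> R).
Hypothesis Msym : forall i j, M i j = M j i.
Hypothesis Dsq : forall i, D i ^+ 2 = 1.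
Hypothesis Dpos : forall i j, i != j -> 0 <= M i j * D i * D j.
Hypothesis Madj : forall i j, i != j -> adj i j = (M i j != 0).
Hypothesis Hc : connected_graph adj.
Hypothesis Hirr : irreflexive adj.
Hypothesis Hray : forall x, qf M x <= lam * nf x.

Lemma qf_Mx x : qf M x = \sum_i x i * Mx M x i.
Proof.
rewrite /qf /Mx; apply: eq_bigr => i _; rewrite mulr_sumr; apply: eq_bigr => j _.
by rewrite mulrA.
Qed.

Lemma pf_core g : (forall i, Mx M g i = lam * g i) -> (exists i, g i != 0) ->
  (forall i, g i != 0) /\ (forall i j, i != j -> 0 <= M i j * g i * g j).
Proof.
move=> Hg [i0 gi0].
have Dn : forall i, `|D i| = 1.
  by move=> i; apply/eqP; rewrite -sqr_norm_eq1 Dsq.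
have D0 : forall i, D i != 0.
  by move=> i; apply/eqP => d0; have := Dn i; rewrite d0 normr0 => /eqP; rewrite eq_sym oner_eq0.
pose G i := D i * `|g i|.
pose T i j := G i * M i j * G j - g i * M i j * g j.
have T0 : forall i j, 0 <= T i j.
  move=> i j; rewrite /T subr_ge0 /G.
  have [<-|ij] := eqVneq i j.
    have -> : D i * `|g i| * M i i * (D i * `|g i|) = D i ^+ 2 * (`|g i| ^+ 2) * M i i by ring.
    by rewrite Dsq real_normK ?num_real // mul1r expr2 mulrAC.
  have -> : D i * `|g i| * M i j * (D j * `|g j|) = (M i j * D i * D j) * (`|g i| * `|g j|) by ring.
  apply: le_trans (ler_norm _) _.
  have eM : `|M i j| = `|M i j * D i * D j| by rewrite !normrM !Dn !mulr1.
  rewrite !normrM eM (ger0_norm (Dpos ij)).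
  by rewrite le_eqVlt; apply/orP; left; apply/eqP; ring.
have qg : qf M g = lam * nf g.
  rewrite qf_Mx /nf mulr_sumr; apply: eq_bigr => i _; rewrite Hg; ring.
have nG : nf G = nf g.
  rewrite /nf; apply: eq_bigr => k _; by rewrite /G exprMn Dsq mul1r real_normK ?num_real.
have sumT : qf M G - qf M g = \sum_i \sum_j T i j.
  rewrite /qf -sumrB; apply: eq_bigr => k _; rewrite -sumrB; exact: eq_bigr.
have sumT0 : \sum_i \sum_j T i j = 0.
  apply/eqP; rewrite eq_le; apply/andP; split; last first.
    by apply: sumr_ge0 => i _; apply: sumr_ge0 => j _; exact: T0.
  by rewrite -sumT subr_le0 qg -nG Hray.
have qG : qf M G = lam * nf G.
  apply/eqP; rewrite eq_le Hray /= nG -qg -subr_ge0 sumT sumT0 //.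
have HG := quad Msym Hray qG.
have Tz : forall i j, T i j = 0.
  move=> i j.
  have Ti : forall i, 0 <= \sum_j T i j by move=> k; apply: sumr_ge0 => l _; exact: T0.
  have := @psumr_eq0P _ _ _ _ (fun i _ => Ti i) sumT0 i isT.
  by move=> h; exact: (@psumr_eq0P _ _ _ _ (fun j _ => T0 i j) h j isT).
have prop : forall z j, g z = 0 -> adj z j -> g j = 0.
  move=> z j gz hzj.
  have zj : z != j by apply/eqP => e; move: hzj; rewrite -e Hirr.
  have := HG z; rewrite /G gz normr0 mulr0 mulr0 /Mx => hs.
  have hs' : \sum_k (D z * M z k * D k * `|g k|) = 0.
    have -> : \sum_k (D z * M z k * D k * `|g k|) = D z * \sum_k M z k * (D k * `|g k|).
      by rewrite mulr_sumr; apply: eq_bigr => k _; ring.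
    by rewrite hs mulr0.
  have tz : forall k, 0 <= D z * M z k * D k * `|g k|.
    move=> k; have [<-|zk] := eqVneq z k; first by rewrite gz normr0 mulr0.
    apply: mulr_ge0 => //; have -> : D z * M z k * D k = M z k * D z * D k by ring.
    exact: Dpos zk.
  have := @psumr_eq0P _ _ _ _ (fun k _ => tz k) hs' j isT.
  move/eqP; rewrite mulf_eq0 => /orP [|]; last by rewrite normr_eq0 => /eqP.
  rewrite !mulf_eq0 (negbTE (D0 _)) /= (negbTE (D0 j)) orbF.
  by have := Madj zj; rewrite hzj => /esym /negbTE ->.
have nz : forall i, g i != 0.
  move=> z; apply/eqP => gz; move: gi0; apply/negP; rewrite negbK.
  have /connectP [p hp ->] := Hc z i0.
  elim: p z gz hp => [|y p IH] z gz //=; first by rewrite gz.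
  by case/andP => hzy hp; apply: (IH y) => //; exact: prop hzy.
split => // i j ij.
have -> : M i j * g i * g j = g i * M i j * g j by ring.
have := Tz i j; rewrite /T /G => /eqP; rewrite subr_eq0 => /eqP <-.
have -> : D i * `|g i| * M i j * (D j * `|g j|) = (M i j * D i * D j) * (`|g i| * `|g j|) by ring.
by apply: mulr_ge0; [exact: Dpos|exact: mulr_ge0].
Qed.

End Core.

Section Count.
Variables (R : realType) (n : nat) (adj : rel 'I_n) (sgn : 'I_n -> 'I_n -> R) (F : 'I_n -> R).

Lemma nclasses_id (P : 'I_n -> 'I_n -> Prop) :
  (forall x y, P x y <-> x = y) -> nclasses P [set: 'I_n] = n.
Proof.
move=> HP; rewrite /nclasses.
have E : (fun x => [set y in [set: 'I_n] | `[< P x y >]]) =1 (fun x => [set x]).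
  move=> x; apply/setP => y; rewrite !inE /=.
  apply/asboolP/eqP => [/HP ->|->] //; exact/HP.
by rewrite (eq_imset _ E) card_imset ?cardsT ?card_ord //; exact: set1_inj.
Qed.

Hypothesis Fnz : forall i, F i != 0.
Hypothesis Fneg : forall i j, adj i j -> F i * sgn i j * F j < 0.

Lemma nodal_all : nodal_set F = [set: 'I_n].
Proof. by apply/setP => x; rewrite !inE Fnz. Qed.

Lemma S_rel_id x y : S_rel adj sgn F x y <-> x = y.
Proof.
split => [[//|[s [[hs hp hh hl] Sw]]]|->]; last by left.
case: s hs hp hh hl Sw => [|s0 [|s1 s]] //= _ /andP [h01 _] _ _ Sw.
have h1 := Sw 0%N isT; have h2 := Fneg h01.
by have := lt_trans h2 h1; rewrite ltxx.
Qed.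

Lemma W_rel_id x y : W_rel adj sgn F x y <-> x = y.
Proof.
split => [[//|[s [[hs hp hh hl] Ww]]]|->]; last by left.
case: s hs hp hh hl Ww => [|s0 [|s1 s]] //= _ /andP [h01 _] _ _ Ww.
have h1 := Ww 0%N 1%N isT isT (Fnz _) (Fnz _) (fun l a b => ltac:(lia)).
rewrite big_nat1 /= in h1; have h2 := Fneg h01.
by have := lt_trans h2 h1; rewrite ltxx.
Qed.

Lemma counts_n : nW adj sgn F = n /\ nS adj sgn F = n.
Proof.
by rewrite /nW /nS nodal_all; split; apply: nclasses_id; [exact: W_rel_id|exact: S_rel_id].
Qed.

End Count.

Section Converse.
Variables (R : realType) (n : nat) (adj : rel 'I_n) (sgn : 'I_n -> 'I_n -> R) (F : 'I_n -> R).
Hypothesis Hsg : signed_graph adj sgn.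

Lemma S_prepend x z y : adj z x -> 0 < F z * sgn z x * F x ->
  S_rel adj sgn F x y -> S_rel adj sgn F z y.
Proof.
move=> hzx hpos [<-|[s [[hs hp hh hl] Sw]]]; right.
  exists [:: z; x]; split; first by split => //=; rewrite hzx.
  by move=> [|k] //=.
case: s hs hp hh hl Sw => [|s0 s] //= hs hp hh hl Sw; subst s0.
exists [:: z, x & s]; split.
  by split => //=; rewrite hzx hp.
move=> [|k] /= hk; first exact: hpos.
have := Sw k hk; rewrite /=.
case: k hk => [|k] hk /=; first by rewrite (set_nth_default z) //.
have e1 : nth z s k = nth x s k by apply: set_nth_default; move: hk => /=; lia.
have e2 : nth z s k.+1 = nth x s k.+1 by apply: set_nth_default; move: hk => /=; lia.
by rewrite e1 e2.
Qed.

Lemma converse : nS adj sgn F = n -> antibalanced adj sgn.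
Proof.
have [asym airr ssym spm] := Hsg.
rewrite /nS /nclasses.
set Om := nodal_set F.
set cls := fun x => [set y in Om | `[< S_rel adj sgn F x y >]].
move=> hN.
have c1 := leq_imset_card cls Om.
have c2 : (#|Om| <= n)%N by rewrite -[X in (_ <= X)%N]card_ord max_card.
have hOm : #|Om| = n by apply/eqP; rewrite eqn_leq c2 -{1}hN c1.
have OmT : Om = [set: 'I_n].
  by apply/eqP; rewrite eqEcard finset.subsetT cardsT card_ord hOm leqnn.
have Fnz : forall i, F i != 0.
  move=> i; have : i \in Om by rewrite OmT finset.in_setT.
  by rewrite /Om /nodal_set inE.
have inj : {in Om &, injective cls}.
  by apply/imset_injP; rewrite hN hOm.
have Fnp : forall i j, adj i j -> ~ (0 < F i * sgn i j * F j).
  move=> i j hij hpos.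
  have hji : adj j i by rewrite asym.
  have hpos' : 0 < F j * sgn j i * F i.
    have e : F j * sgn j i * F i = F i * sgn i j * F j by rewrite (ssym _ _ hji); ring.
    by rewrite e.
  have : cls i = cls j.
    apply/setP => y; rewrite !inE; congr (_ && _).
    apply/asboolP/asboolP; [exact: S_prepend hji hpos'|exact: S_prepend hij hpos].
  move/inj; rewrite OmT => /(_ (finset.in_setT _) (finset.in_setT _)) eij.
  by move: hij; rewrite eij airr.
have Fneg : forall i j, adj i j -> F i * sgn i j * F j < 0.
  move=> i j hij; rewrite lt_neqAle leNgt; apply/andP; split.
    rewrite !mulf_neq0 ?Fnz //; case: (spm _ _ hij) => ->; rewrite ?oner_eq0 //.
    by rewrite oppr_eq0 oner_eq0.
  by apply/negP => /Fnp; apply.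
pose t i := Num.sg (F i).
have t2 : forall i, t i ^+ 2 = 1 by move=> i; rewrite /t sqr_sg Fnz.
have sgn_t : forall i j, adj i j -> sgn i j = - (t i * t j).
  move=> i j hij.
  have hs : Num.sg (F i * sgn i j * F j) = -1 by rewrite ltr0_sg ?Fneg.
  rewrite !sgrM in hs.
  have ss : Num.sg (sgn i j) = sgn i j by case: (spm _ _ hij) => ->; rewrite ?sgr1 ?sgrN1.
  rewrite ss in hs.
  have -> : sgn i j = sgn i j * t i ^+ 2 * t j ^+ 2 by rewrite !t2 !mulr1.
  have -> : sgn i j * t i ^+ 2 * t j ^+ 2 = t i * t j * (Num.sg (F i) * sgn i j * Num.sg (F j)) by rewrite /t; ring.
  rewrite hs; ring.
have wpt : forall x p, path adj x p -> wp sgn x p = (-1) ^+ size p * (t x * t (last x p)).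
  move=> x p; elim: p x => [|y p IH] x /=; first by rewrite expr0 mul1r -expr2 t2.
  case/andP => hxy hp; rewrite IH // sgn_t // exprS.
  have -> : - (t x * t y) * ((-1) ^+ size p * (t y * t (last y p))) =
    - ((-1) ^+ size p * (t x * t (last y p))) * t y ^+ 2 by ring.
  rewrite t2; ring.
move=> [|y p] [hs3 _ hcyc] //.
rewrite cycle_sign_cons.
move: hcyc; rewrite [cycle _ _]/= rcons_path => /andP [hp hl].
rewrite wpt // sgn_t //.
have -> : (-1) ^+ size p * (t y * t (last y p)) * - (t (last y p) * t y) =
  - (-1) ^+ size p * (t y ^+ 2 * t (last y p) ^+ 2) by ring.
rewrite !t2 mulr1 -mulN1r -exprS -signr_odd /=.
by case: (odd (size p)); rewrite /= ?expr1 ?expr0 ?mulr1.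
Qed.

End Converse.

Theorem theorem3p4 (R : realType) (n : nat) (adj : rel 'I_n)
    (sgn : 'I_n -> 'I_n -> R) (M : 'M[R]_n) (lam : R) (f : 'cV[R]_n) :
  signed_graph adj sgn -> connected_graph adj ->
  M^T = M -> compatible adj sgn M ->
  largest_eigenvalue M lam -> eigenfunction M lam f ->
  (antibalanced adj sgn <->
     (nW adj sgn (fun i => f i ord0) = n /\ nS adj sgn (fun i => f i ord0) = n))
  /\ (antibalanced adj sgn -> simple_eigenvalue M lam).
Proof.
move=> Hsg Hc MT Hcomp [Hev Hmax] [fn0 Hf].
have [asym airr ssym spm] := Hsg.
pose F : 'I_n -> R := fun i => f i ord0.
have Msym : forall i j, M i j = M j i by move=> i j; rewrite -[in LHS]MT mxE.
have Hray := rayleigh Msym Hmax.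
have HF : forall i, Mx M F i = lam * F i.
  by move=> i; have := congr1 (fun A : 'cV[R]_n => A i ord0) Hf; rewrite !mxE.
have [i0 Fi0] : exists i, F i != 0.
  apply/existsP; rewrite -negb_forall; apply: contra fn0 => /forallP h.
  by apply/eqP/matrixP => i j; rewrite (ord1 j) mxE; move: (h i) => /eqP.
have Madj : forall i j, i != j -> adj i j = (M i j != 0) by move=> i j ij; case: (Hcomp i j ij).
have core : antibalanced adj sgn -> forall g, (forall i, Mx M g i = lam * g i) ->
    (exists i, g i != 0) ->
    (forall i, g i != 0) /\ (forall i j, i != j -> 0 <= M i j * g i * g j).
  move=> Hab g Hg gn0.
  have [D [Dsq Dedge]] := switching Hsg Hab Hc i0.
  have Dpos : forall i j, i != j -> 0 <= M i j * D i * D j.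
    move=> i j ij; have [Ha Hs] := Hcomp i j ij.
    case: (boolP (adj i j)) => hij.
      have e : Num.sg (M i j) = D i * D j.
        by apply: oppr_inj; rewrite -Hs // -Dedge.
      by rewrite -mulrA -e mulrC -normrEsg normr_ge0.
    by move: Ha; rewrite (negbTE hij) => /esym /negbFE /eqP ->; rewrite !mul0r.
  exact: (pf_core Msym Dsq Dpos Madj Hc airr Hray Hg gn0).
split; last first.
  move=> Hab; rewrite /simple_eigenvalue.
  have [Fnz _] := core Hab F HF (ex_intro _ i0 Fi0).
  have fT : (f^T <= eigenspace M lam)%MS.
    apply/eigenspaceP; rewrite -[M in _ *m M]MT -trmx_mul Hf.
    by apply/matrixP => i j; rewrite !mxE.
  have le1 : (eigenspace M lam <= f^T)%MS.
    apply/row_subP => k.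
    set v := row k (eigenspace M lam).
    have hv : v *m M = lam *: v by apply/eigenspaceP; rewrite row_sub.
    pose c := v ord0 i0 / F i0.
    pose g i := v ord0 i - c * F i.
    have Hg : forall i, Mx M g i = lam * g i.
      move=> i; rewrite /Mx /g.
      have e1 : \sum_j M i j * v ord0 j = lam * v ord0 i.
        have := congr1 (fun A : 'rV[R]_n => A ord0 i) hv; rewrite !mxE => <-.
        by apply: eq_bigr => j _; rewrite Msym mulrC.
      have e2 : \sum_j M i j * (c * F j) = c * (lam * F i).
        by rewrite -HF /Mx mulr_sumr; apply: eq_bigr => j _; ring.
      under eq_bigr do rewrite mulrBr.
      by rewrite sumrB e1 e2; ring.
    have g0 : forall i, g i = 0.
      move=> i; apply/eqP; apply/negPn/negP => hi.
      have [nz _] := core Hab g Hg (ex_intro _ i hi).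
      by move: (nz i0); rewrite /g /c divfK // subrr eqxx.
    have -> : v = c *: f^T.
      apply/rowP => j; have := g0 j; rewrite /g => /eqP; rewrite subr_eq0 => /eqP ->.
      by rewrite !mxE.
    by apply: scalemx_sub; exact: submx_refl.
  apply/eqP; rewrite eqn_leq; apply/andP; split.
    exact: leq_trans (mxrankS le1) (rank_leq_row _).
  rewrite lt0n mxrank_eq0; apply/negP => /eqP E0.
  move: fT; rewrite E0 submx0 => /eqP fT0.
  by move/eqP: fn0; apply; apply: trmx_inj; rewrite fT0 trmx0.
split.
  move=> Hab.
  have [Fnz Fpos] := core Hab F HF (ex_intro _ i0 Fi0).
  apply: counts_n => // i j hij.
  have ij : i != j by apply/eqP => e; move: hij; rewrite e airr.
  have [Ha Hs] := Hcomp i j ij.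
  have hM : M i j != 0 by rewrite -Ha.
  have h1 : 0 < M i j * F i * F j by rewrite lt_def !mulf_neq0 ?Fnz // Fpos.
  have e : M i j * F i * F j = `|M i j| * (Num.sg (M i j) * F i * F j).
    by rewrite -{1}(mulr_sg_norm (M i j)); ring.
  rewrite e pmulr_rgt0 ?normr_gt0 // in h1.
  rewrite Hs //.
  have -> : F i * - Num.sg (M i j) * F j = - (Num.sg (M i j) * F i * F j) by ring.
  by rewrite oppr_lt0.
by move=> [_ HS]; exact: converse Hsg HS.
Qed.
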